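(* Let $F$ be a countable subfield of $\mathbb{R}$, and let $\varphi=\exists x_1\cdots\exists x_n\,\psi(x_1,\ldots,x_n)$ where $\psi$ is quantifier-free in the language $\{0,1,+,\times,<\}$. Then there exist $a_1,\ldots,a_n\in F$ such that $\psi(a_1,\ldots,a_n)$ holds in $\mathbb{R}$ if and only if for every model $\mathcal M$ of $T[F]^*$ there exist $b_1,\ldots,b_n$ in $\mathcal M$ with $\mathcal M\models\psi(b_1,\ldots,b_n)$ and $\mathcal M\models b_i\times(1+b_i)=b_i+(b_i\times b_i)$ for each $i$.
   Context: $T[F]^*$ is the theory in the language $\{0,1,+,\times,<\}\cup\{c_a: a\in F\}$ ($c_a$ constant symbols) with axioms: (1) $0,+,<$ form an ordered abelian group; (2) the positive elements form a divisible ordered abelian group under $\times$ with identity $1$ and order $<$; (3a) $c_{a+b}=c_a+c_b$, (3b) $c_{ab}=c_a\times c_b$, for $a,b\in F$; (3c) $0<c_a$ for $a\in F$, $a>0$; (4a) $c_{a+b}\times x=(c_a\times x)+(c_b\times x)$ and (4b) $c_a\times(x+y)=(c_a\times x)+(c_a\times y)$, for all $a,b\in F$ and all $x,y$. *)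

(* Defs.v *)
From Stdlib Require Import Reals.
From Stdlib Require Fin.
Open Scope R_scope.

Record is_subfield (F : R -> Prop) : Prop := {
  sf_0 : F 0;
  sf_1 : F 1;
  sf_add : forall x y, F x -> F y -> F (x + y);
  sf_opp : forall x, F x -> F (- x);
  sf_mul : forall x y, F x -> F y -> F (x * y);
  sf_inv : forall x, F x -> x <> 0 -> F (/ x)
}.

Definition countable_set (F : R -> Prop) : Prop :=
  exists f : {x : R | F x} -> nat, forall u v, f u = f v -> u = v.

Inductive term (n : nat) : Type :=
| Tvar : Fin.t n -> term n
| Tzero : term n
| Tone : term n
| Tadd : term n -> term n -> term n
| Tmul : term n -> term n -> term n.

Inductive qf_formula (n : nat) : Type :=
| Feq : term n -> term n -> qf_formula n
| Flt : term n -> term n -> qf_formula n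
| Fnot : qf_formula n -> qf_formula n
| Fand : qf_formula n -> qf_formula n -> qf_formula n
| For : qf_formula n -> qf_formula n -> qf_formula n.

Arguments Tvar {n}. Arguments Tzero {n}. Arguments Tone {n}.
Arguments Tadd {n}. Arguments Tmul {n}.
Arguments Feq {n}. Arguments Flt {n}. Arguments Fnot {n}.
Arguments Fand {n}. Arguments For {n}.

(** Structures for the language {0,1,+,x,<} U {c_a : a in F}.
    The constants are given by a map [cst : R -> car]; only its values on F
    matter (c_a for a in F). *)
Record LStruct : Type := {
  car : Type;
  zeroM : car;
  oneM : car;
  addM : car -> car -> car;
  mulM : car -> car -> car;
  ltM : car -> car -> Prop;
  cst : R -> car
}.

Fixpoint eval_term {n} (M : LStruct) (v : Fin.t n -> car M) (t : term n) : car M :=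
  match t with
  | Tvar i => v i
  | Tzero => zeroM M
  | Tone => oneM M
  | Tadd t1 t2 => addM M (eval_term M v t1) (eval_term M v t2)
  | Tmul t1 t2 => mulM M (eval_term M v t1) (eval_term M v t2)
  end.

Fixpoint sat {n} (M : LStruct) (v : Fin.t n -> car M) (f : qf_formula n) : Prop :=
  match f with
  | Feq t1 t2 => eval_term M v t1 = eval_term M v t2
  | Flt t1 t2 => ltM M (eval_term M v t1) (eval_term M v t2)
  | Fnot g => ~ sat M v g
  | Fand g h => sat M v g /\ sat M v h
  | For g h => sat M v g \/ sat M v h
  end.

Definition Rstruct : LStruct :=
  {| car := R; zeroM := 0; oneM := 1; addM := Rplus; mulM := Rmult;
     ltM := Rlt; cst := fun a => a |}.

Fixpoint powM (M : LStruct) (x : car M) (k : nat) : car M :=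
  match k with
  | O => x
  | S k' => mulM M x (powM M x k')
  end.
(* powM M x k = x^(k+1) *)

Record model_TF (F : R -> Prop) (M : LStruct) : Prop := {
  (* (1) 0, +, < form an ordered abelian group *)
  ax_add_assoc : forall x y z, addM M x (addM M y z) = addM M (addM M x y) z;
  ax_add_comm : forall x y, addM M x y = addM M y x;
  ax_add_0 : forall x, addM M (zeroM M) x = x;
  ax_add_inv : forall x, exists y, addM M x y = zeroM M;
  ax_lt_irrefl : forall x, ~ ltM M x x;
  ax_lt_trans : forall x y z, ltM M x y -> ltM M y z -> ltM M x z;
  ax_lt_total : forall x y, ltM M x y \/ x = y \/ ltM M y x;
  ax_lt_add : forall x y z, ltM M x y -> ltM M (addM M x z) (addM M y z);
  (* (2) positive elements form a divisible ordered abelian group under x,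
     with identity 1 and order < *)
  ax_pos_1 : ltM M (zeroM M) (oneM M);
  ax_pos_mul_closed : forall x y, ltM M (zeroM M) x -> ltM M (zeroM M) y ->
      ltM M (zeroM M) (mulM M x y);
  ax_pos_mul_assoc : forall x y z, ltM M (zeroM M) x -> ltM M (zeroM M) y ->
      ltM M (zeroM M) z -> mulM M x (mulM M y z) = mulM M (mulM M x y) z;
  ax_pos_mul_comm : forall x y, ltM M (zeroM M) x -> ltM M (zeroM M) y ->
      mulM M x y = mulM M y x;
  ax_pos_mul_1 : forall x, ltM M (zeroM M) x -> mulM M (oneM M) x = x;
  ax_pos_mul_inv : forall x, ltM M (zeroM M) x ->
      exists y, ltM M (zeroM M) y /\ mulM M x y = oneM M;
  ax_pos_lt_mul : forall x y z, ltM M (zeroM M) x -> ltM M (zeroM M) y ->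
      ltM M (zeroM M) z -> ltM M x y -> ltM M (mulM M x z) (mulM M y z);
  ax_pos_divisible : forall (k : nat) x, ltM M (zeroM M) x ->
      exists y, ltM M (zeroM M) y /\ powM M y k = x;
  ax_cst_add : forall a b, F a -> F b -> cst M (a + b) = addM M (cst M a) (cst M b);
  ax_cst_mul : forall a b, F a -> F b -> cst M (a * b) = mulM M (cst M a) (cst M b);
  ax_cst_pos : forall a, F a -> 0 < a -> ltM M (zeroM M) (cst M a);
  (* (4) distributivity with constants *)
  ax_cst_distr_l : forall a b x, F a -> F b ->
      mulM M (cst M (a + b)) x = addM M (mulM M (cst M a) x) (mulM M (cst M b) x);
  ax_cst_distr_r : forall a x y, F a ->
      mulM M (cst M a) (addM M x y) = addM M (mulM M (cst M a) x) (mulM M (cst M a) y)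
}.

(* Main.v *)
Require Import Defs.
From Stdlib Require Import Reals Lra ZArith List ClassicalDescription ClassicalEpsilon FunctionalExtensionality ProofIrrelevance.
From Stdlib Require Fin.
Open Scope R_scope.


Section Generic.
Variable F : R -> Prop.
Hypothesis HF : is_subfield F.
Variable M : LStruct.
Hypothesis HM : model_TF F M.

Lemma add_cancel (x y z : car M) : addM M x z = addM M y z -> x = y.
Proof.
  intro H. destruct (ax_add_inv F M HM z) as [w Hw].
  rewrite <- (ax_add_0 F M HM x), <- (ax_add_0 F M HM y).
  rewrite <- Hw. rewrite (ax_add_comm F M HM z w).
  rewrite <- !(ax_add_assoc F M HM). rewrite (ax_add_comm F M HM w (addM M z x)).
  rewrite (ax_add_comm F M HM w (addM M z y)).
  rewrite (ax_add_comm F M HM z x), (ax_add_comm F M HM z y), H. reflexivity.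
Qed.

Lemma cst0 : cst M 0 = zeroM M.
Proof.
  apply (add_cancel _ _ (cst M 0)).
  rewrite <- (ax_cst_add F M HM 0 0) by apply (sf_0 F HF).
  rewrite Rplus_0_r. rewrite (ax_add_0 F M HM). reflexivity.
Qed.

Lemma cst1 : cst M 1 = oneM M.
Proof.
  assert (P1 : ltM M (zeroM M) (cst M 1)) by (apply (ax_cst_pos F M HM); [apply (sf_1 F HF)|lra]).
  assert (E : mulM M (cst M 1) (cst M 1) = cst M 1).
  { rewrite <- (ax_cst_mul F M HM) by apply (sf_1 F HF). rewrite Rmult_1_r. reflexivity. }
  destruct (ax_pos_mul_inv F M HM _ P1) as [w [Pw Hw]].
  pose proof (ax_pos_1 F M HM) as P0.
  assert (mulM M (mulM M (cst M 1) (cst M 1)) w = mulM M (cst M 1) w) by (rewrite E; reflexivity).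
  rewrite <- (ax_pos_mul_assoc F M HM) in H by assumption.
  rewrite Hw in H. rewrite (ax_pos_mul_comm F M HM) in H by assumption.
  rewrite (ax_pos_mul_1 F M HM) in H by assumption. exact H.
Qed.

Lemma lt_add_pos (u x : car M) : ltM M (zeroM M) u -> ltM M x (addM M u x).
Proof.
  intro H. pose proof (ax_lt_add F M HM _ _ x H) as H2. rewrite (ax_add_0 F M HM) in H2. exact H2.
Qed.

Lemma cst_lt (a b : R) : F a -> F b -> a < b -> ltM M (cst M a) (cst M b).
Proof.
  intros Fa Fb Hab.
  assert (Fd : F (b + - a)) by (apply (sf_add F HF); [exact Fb| apply (sf_opp F HF); exact Fa]).
  replace (cst M b) with (cst M ((b + - a) + a)) by (f_equal; ring).
  rewrite (ax_cst_add F M HM) by assumption.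
  apply lt_add_pos. apply (ax_cst_pos F M HM); [exact Fd | lra].
Qed.

Lemma cst_lt_iff (a b : R) : F a -> F b -> (ltM M (cst M a) (cst M b) <-> a < b).
Proof.
  intros Fa Fb. split.
  - intro H. destruct (Rtotal_order a b) as [h|[h|h]]; [exact h| |].
    + subst. exfalso. exact (ax_lt_irrefl F M HM _ H).
    + exfalso. pose proof (cst_lt b a Fb Fa h).
      exact (ax_lt_irrefl F M HM _ (ax_lt_trans F M HM _ _ _ H H0)).
  - apply cst_lt; assumption.
Qed.

Lemma cst_inj (a b : R) : F a -> F b -> cst M a = cst M b -> a = b.
Proof.
  intros Fa Fb H. destruct (Rtotal_order a b) as [h|[h|h]]; [| exact h |].
  - exfalso. pose proof (cst_lt a b Fa Fb h). rewrite H in H0. exact (ax_lt_irrefl F M HM _ H0).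
  - exfalso. pose proof (cst_lt b a Fb Fa h). rewrite H in H0. exact (ax_lt_irrefl F M HM _ H0).
Qed.

Lemma eval_cst {n} (a : Fin.t n -> R) (Ha : forall i, F (a i)) (t : term n) :
  F (@eval_term n Rstruct a t) /\
  eval_term M (fun i => cst M (a i)) t = cst M (@eval_term n Rstruct a t).
Proof.
  induction t as [i| | |t1 [F1 E1] t2 [F2 E2]|t1 [F1 E1] t2 [F2 E2]]; simpl.
  - split; [apply Ha | reflexivity].
  - split; [apply (sf_0 F HF) | symmetry; apply cst0].
  - split; [apply (sf_1 F HF) | symmetry; apply cst1].
  - split; [apply (sf_add F HF); assumption|]. rewrite E1, E2. symmetry. apply (ax_cst_add F M HM); assumption.
  - split; [apply (sf_mul F HF); assumption|]. rewrite E1, E2. symmetry. apply (ax_cst_mul F M HM); assumption.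
Qed.

Lemma sat_cst {n} (a : Fin.t n -> R) (Ha : forall i, F (a i)) (f : qf_formula n) :
  sat M (fun i => cst M (a i)) f <-> sat Rstruct a f.
Proof.
  induction f; simpl.
  - destruct (eval_cst a Ha t) as [F1 E1]. destruct (eval_cst a Ha t0) as [F2 E2].
    rewrite E1, E2. split; intro H; [apply (cst_inj _ _ F1 F2 H) | rewrite H; reflexivity].
  - destruct (eval_cst a Ha t) as [F1 E1]. destruct (eval_cst a Ha t0) as [F2 E2].
    rewrite E1, E2. apply cst_lt_iff; assumption.
  - tauto.
  - tauto.
  - tauto.
Qed.

Lemma good_cst (a : R) : F a ->
  mulM M (cst M a) (addM M (oneM M) (cst M a)) = addM M (cst M a) (mulM M (cst M a) (cst M a)).
Proof.
  intro Fa. rewrite (ax_cst_distr_r F M HM) by exact Fa.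
  rewrite <- cst1. rewrite <- (ax_cst_mul F M HM) by (auto using (sf_1 F HF)).
  rewrite Rmult_1_r. reflexivity.
Qed.

End Generic.

Definition kk (x : R) := x * x * x.
Definition fin (f : R -> R) := exists l : list R, forall q, f q <> 0 -> In q l.
Definition top (f : R -> R) e := f e <> 0 /\ forall q, e < q -> f q = 0.
Definition pos (f : R -> R) := exists e, 0 < f e /\ forall q, e < q -> f q = 0.
Definition negsupp (f : R -> R) := forall q, 0 <= q -> f q = 0.
Definition e0 (q : R) : R := if Req_dec_T q 0 then 1 else 0.
Definition e1 (q : R) : R := if Req_dec_T q (-1) then 1 else 0.

Lemma top_unique f e e' : top f e -> top f e' -> e = e'.
Proof.
  intros [H1 H2] [H3 H4]. destruct (Rtotal_order e e') as [h|[h|h]]; auto.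
  - exfalso. apply H3. apply H2. exact h.
  - exfalso. apply H1. apply H4. exact h.
Qed.

Definition deg (f : R -> R) : R :=
  match excluded_middle_informative (exists e, top f e) with
  | left H => proj1_sig (constructive_indefinite_description _ H)
  | right _ => 0 end.

Lemma deg_spec f e : top f e -> deg f = e.
Proof.
  intro H. unfold deg. destruct (excluded_middle_informative _) as [H'|H'].
  - destruct (constructive_indefinite_description _ H') as [e' He']. simpl.
    exact (top_unique _ _ _ He' H).
  - exfalso. apply H'. exists e. exact H.
Qed.

Definition lc (f : R -> R) := f (deg f).
Definition tail (f : R -> R) (q : R) := if Rlt_dec q 0 then f (q + deg f) / lc f else 0.
Definition mk (d c : R) (y : R -> R) (q : R) := c * (e0 (q - d) + y (q - d)).

Lemma e0_0 : e0 0 = 1.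
Proof. unfold e0. destruct (Req_dec_T 0 0); [reflexivity| congruence]. Qed.
Lemma e0_n q : q <> 0 -> e0 q = 0.
Proof. intro H. unfold e0. destruct (Req_dec_T q 0); [congruence| reflexivity]. Qed.
Lemma e1_nonneg q : 0 <= q -> e1 q = 0.
Proof. intro H. unfold e1. destruct (Req_dec_T q (-1)); [lra| reflexivity]. Qed.
Lemma e1_m1 : e1 (-1) = 1.
Proof. unfold e1. destruct (Req_dec_T (-1) (-1)); [reflexivity| congruence]. Qed.

Lemma pos_top f : pos f -> top f (deg f) /\ 0 < lc f.
Proof.
  intros [e [H1 H2]]. assert (T : top f e) by (split; [lra| exact H2]).
  pose proof (deg_spec _ _ T) as D. unfold lc. rewrite D. split; [exact T| exact H1].
Qed.

Lemma negsupp_tail f : negsupp (tail f).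
Proof. intros q Hq. unfold tail. destruct (Rlt_dec q 0); [lra| reflexivity]. Qed.

Lemma mk_decomp f : pos f -> forall q, f q = mk (deg f) (lc f) (tail f) q.
Proof.
  intros P q. destruct (pos_top f P) as [[T1 T2] C]. unfold mk, tail.
  destruct (Rtotal_order q (deg f)) as [h|[h|h]].
  - rewrite e0_n by lra. destruct (Rlt_dec (q - deg f) 0); [|lra].
    replace (q - deg f + deg f) with q by ring. field. lra.
  - subst q. replace (deg f - deg f) with 0 by ring. rewrite e0_0.
    destruct (Rlt_dec 0 0); [lra|]. unfold lc. ring.
  - rewrite T2 by exact h. rewrite e0_n by lra. destruct (Rlt_dec (q - deg f) 0); [lra|]. ring.
Qed.

Lemma top_mk d c y : c <> 0 -> negsupp y -> top (mk d c y) d.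
Proof.
  intros C N. unfold mk. split.
  - replace (d - d) with 0 by ring. rewrite e0_0, (N 0) by lra. rewrite Rplus_0_r, Rmult_1_r. exact C.
  - intros q h. rewrite e0_n by lra. rewrite (N (q - d)) by lra. ring.
Qed.

Lemma deg_mk d c y : c <> 0 -> negsupp y -> deg (mk d c y) = d.
Proof. intros. apply deg_spec. apply top_mk; assumption. Qed.

Lemma lc_mk d c y : c <> 0 -> negsupp y -> lc (mk d c y) = c.
Proof.
  intros C N. unfold lc. rewrite deg_mk by assumption. unfold mk.
  replace (d - d) with 0 by ring. rewrite e0_0, (N 0) by lra. ring.
Qed.

Lemma tail_mk d c y : c <> 0 -> negsupp y -> tail (mk d c y) = y.
Proof.
  intros C N. apply functional_extensionality. intro q. unfold tail.
  rewrite lc_mk, deg_mk by assumption. destruct (Rlt_dec q 0).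
  - unfold mk. replace (q + d - d) with q by ring. rewrite e0_n by lra. field. exact C.
  - rewrite N by lra. reflexivity.
Qed.

Lemma pos_mk d c y : 0 < c -> negsupp y -> pos (mk d c y).
Proof.
  intros C N. destruct (top_mk d c y) as [_ T]; [lra|assumption|].
  exists d. split; [|exact T]. unfold mk. replace (d - d) with 0 by ring.
  rewrite e0_0, (N 0) by lra. lra.
Qed.

Lemma pos_ext f g : (forall q, f q = g q) -> pos f -> pos g.
Proof. intros E [e [H1 H2]]. exists e. rewrite <- E. split; auto. intros q h. rewrite <- E. auto. Qed.

Lemma pos_add f g : pos f -> pos g -> pos (fun q => f q + g q).
Proof.
  intros [a [A1 A2]] [b [B1 B2]]. destruct (Rtotal_order a b) as [h|[h|h]].
  - exists b. rewrite (A2 b h). split; [lra|]. intros q hq. rewrite A2, B2; lra.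
  - subst. exists b. split; [lra|]. intros q hq. rewrite A2, B2; lra.
  - exists a. rewrite (B2 a h). split; [lra|]. intros q hq. rewrite A2, B2; lra.
Qed.

Lemma not_pos0 f : (forall q, f q = 0) -> ~ pos f.
Proof. intros E [e [H _]]. rewrite E in H. lra. Qed.

Lemma fin_top f : fin f -> forall q0, f q0 <> 0 -> exists e, top f e.
Proof.
  intros [l Hl]. revert f Hl. induction l as [|a l IH]; intros f Hl q0 H0.
  - destruct (Hl q0 H0).
  - destruct (Req_dec_T (f a) 0) as [Ha|Ha].
    + apply (IH f) with q0; [|exact H0]. intros q hq. destruct (Hl q hq) as [E|E]; [subst; congruence| exact E].
    + destruct (classic (exists q1, a < q1 /\ f q1 <> 0)) as [[q1 [Q1 Q2]]|NE].
      * set (g := fun q => if Rle_dec q a then 0 else f q).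
        assert (Hg : forall q, g q <> 0 -> In q l).
        { intros q hq. unfold g in hq. destruct (Rle_dec q a); [congruence|].
          destruct (Hl q hq) as [E|E]; [subst; lra| exact E]. }
        assert (G1 : g q1 <> 0) by (unfold g; destruct (Rle_dec q1 a); [lra| exact Q2]).
        destruct (IH g Hg q1 G1) as [e [E1 E2]].
        assert (ea : a < e) by (unfold g in E1; destruct (Rle_dec e a); [congruence| lra]).
        exists e. split.
        -- unfold g in E1. destruct (Rle_dec e a); [lra| exact E1].
        -- intros q hq. pose proof (E2 q hq) as E3. unfold g in E3. destruct (Rle_dec q a); [lra| exact E3].
      * exists a. split; [exact Ha|]. intros q hq. destruct (Req_dec_T (f q) 0) as [z|z]; [exact z|].
        exfalso. apply NE. exists q. auto.
Qed.
Lemma up_plus1 p : up (p + 1) = (up p + 1)%Z.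
Proof.
  symmetry. apply tech_up; rewrite plus_IZR; destruct (archimed p); lra.
Qed.

Definition ev (p : R) : bool := Z.even (up p).
Lemma ev_S p : ev (p + 1) = negb (ev p).
Proof. unfold ev. rewrite up_plus1. change (up p + 1)%Z with (Z.succ (up p)). rewrite Z.even_succ, <- Z.negb_even. reflexivity. Qed.
Lemma ev_SS p : ev (p + 2) = ev p.
Proof. replace (p + 2) with (p + 1 + 1) by ring. rewrite !ev_S. destruct (ev p); reflexivity. Qed.

Ltac simpk := repeat match goal with
  | |- context [kk (?a + ?b - ?b)] => replace (a + b - b) with a by ring
  | |- context [kk (?a - ?b + ?b)] => replace (a - b + b) with a by ring
  end.

Definition sig (w : R -> R) (p : R) : R :=
  if ev p then w p + kk (w (p + 1) + kk (w (p + 2))) else w p + kk (w (p + 1)).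
Definition siginv (z : R -> R) (p : R) : R :=
  if ev p then z p - kk (z (p + 1)) else z p - kk (z (p + 1) - kk (z (p + 2))).

Lemma siginv_sig w : siginv (sig w) = w.
Proof.
  apply functional_extensionality. intro p. unfold siginv, sig.
  rewrite ev_S, ev_SS. replace (p + 1 + 1) with (p + 2) by ring.
  replace (p + 1 + 2) with (p + 3) by ring. replace (p + 2 + 1) with (p + 3) by ring.
  destruct (ev p); simpl; simpk; ring.
Qed.

Lemma sig_siginv z : sig (siginv z) = z.
Proof.
  apply functional_extensionality. intro p. unfold siginv, sig.
  rewrite ev_S, ev_SS. replace (p + 1 + 1) with (p + 2) by ring.
  replace (p + 1 + 2) with (p + 3) by ring. replace (p + 2 + 1) with (p + 3) by ring.
  destruct (ev p); simpl; simpk; ring.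
Qed.

Lemma sig_agree w w' e : (forall q, e < q -> w q = w' q) -> forall p, e < p -> sig w p = sig w' p.
Proof. intros H p hp. unfold sig. rewrite !H by lra. reflexivity. Qed.
Lemma siginv_agree w w' e : (forall q, e < q -> w q = w' q) -> forall p, e < p -> siginv w p = siginv w' p.
Proof. intros H p hp. unfold siginv. rewrite !H by lra. reflexivity. Qed.
Lemma sig_topdiff w w' e : (forall q, e < q -> w q = w' q) -> sig w' e - sig w e = w' e - w e.
Proof. intros H. unfold sig. rewrite !(H (e + 1)), !(H (e+2)) by lra. destruct (ev e); ring. Qed.
Lemma siginv_topdiff w w' e : (forall q, e < q -> w q = w' q) -> siginv w' e - siginv w e = w' e - w e.
Proof. intros H. unfold siginv. rewrite !(H (e + 1)), !(H (e+2)) by lra. destruct (ev e); ring. Qed.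

Lemma kk0 : kk 0 = 0.
Proof. unfold kk; ring. Qed.

Lemma sig_zero w e : (forall q, e < q -> w q = 0) -> forall p, e < p -> sig w p = 0.
Proof. intros H p hp. unfold sig. rewrite !H by lra. unfold kk. destruct (ev p); ring. Qed.

Lemma negsupp_sig w : negsupp w -> negsupp (sig w).
Proof. intros N q hq. unfold sig. rewrite !N by lra. unfold kk. destruct (ev q); ring. Qed.
Lemma negsupp_siginv w : negsupp w -> negsupp (siginv w).
Proof. intros N q hq. unfold siginv. rewrite !N by lra. unfold kk. destruct (ev q); ring. Qed.

Lemma pos_sig w w' : pos (fun q => w' q - w q) -> pos (fun q => sig w' q - sig w q).
Proof.
  intros [e [H1 H2]]. assert (A : forall q, e < q -> w q = w' q) by (intros q h; specialize (H2 q h); simpl in H2; lra).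
  exists e. split.
  - rewrite (sig_topdiff w w' e A). exact H1.
  - intros q h. rewrite (sig_agree w w' e A q h). ring.
Qed.
Lemma pos_siginv w w' : pos (fun q => w' q - w q) -> pos (fun q => siginv w' q - siginv w q).
Proof.
  intros [e [H1 H2]]. assert (A : forall q, e < q -> w q = w' q) by (intros q h; specialize (H2 q h); simpl in H2; lra).
  exists e. split.
  - rewrite (siginv_topdiff w w' e A). exact H1.
  - intros q h. rewrite (siginv_agree w w' e A q h). ring.
Qed.

Definition th (x : R) := x * Rabs x.
Definition thinv (u : R) := if Rle_dec 0 u then sqrt u else - sqrt (- u).

Lemma th_lt x y : x < y -> th x < th y.
Proof.
  intro h. unfold th. unfold Rabs. assert (P : 0 < y - x) by lra.
  destruct (Rcase_abs x), (Rcase_abs y).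
  - assert (0 < (y - x) * (-(x+y))) by (apply Rmult_lt_0_compat; lra). nra.
  - assert (0 < x * x) by nra. assert (0 <= y * y) by nra. nra.
  - lra.
  - assert (0 < (y - x) * (x+y)) by (apply Rmult_lt_0_compat; lra). nra.
Qed.

Lemma th_0 : th 0 = 0.
Proof. unfold th. rewrite Rabs_R0. ring. Qed.

Lemma thinv_th x : thinv (th x) = x.
Proof.
  unfold thinv, th, Rabs. destruct (Rcase_abs x); destruct (Rle_dec 0 _).
  - nra.
  - replace (- (x * - x)) with ((- x) * (- x)) by ring. rewrite sqrt_square by lra. ring.
  - rewrite sqrt_square by lra. reflexivity.
  - nra.
Qed.

Lemma th_thinv u : th (thinv u) = u.
Proof.
  unfold thinv, th. destruct (Rle_dec 0 u).
  - rewrite Rabs_pos_eq by apply sqrt_pos. rewrite sqrt_sqrt by lra. ring.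
  - rewrite Rabs_Ropp, Rabs_pos_eq by apply sqrt_pos.
    replace (- sqrt (- u) * sqrt (- u)) with (- (sqrt (-u) * sqrt (-u))) by ring.
    rewrite sqrt_sqrt by lra. ring.
Qed.

Lemma thinv_lt u v : u < v -> thinv u < thinv v.
Proof.
  intro h. destruct (Rtotal_order (thinv u) (thinv v)) as [H|[H|H]]; auto.
  - exfalso. apply (f_equal th) in H. rewrite !th_thinv in H. lra.
  - exfalso. apply th_lt in H. rewrite !th_thinv in H. lra.
Qed.

Lemma th_inj x y : th x = th y -> x = y.
Proof. intro H. rewrite <- (thinv_th x), <- (thinv_th y), H. reflexivity. Qed.

Lemma Dpos d : 0 < d -> thinv (th d + th d) < 2 * d /\ thinv (th d + th d) <> d.
Proof.
  intro h. set (D := thinv (th d + th d)). assert (E : th D = th d + th d) by apply th_thinv.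
  assert (T : th d = d * d) by (unfold th; rewrite Rabs_pos_eq by lra; ring).
  split.
  - destruct (Rlt_le_dec D (2 * d)) as [H|H]; [exact H|]. exfalso.
    destruct H as [H|H].
    + apply th_lt in H. assert (th (2*d) = 4 * (d * d)) by (unfold th; rewrite Rabs_pos_eq by lra; ring). nra.
    + assert (th (2*d) = 4 * (d * d)) by (unfold th; rewrite Rabs_pos_eq by lra; ring). rewrite <- H in *. nra.
  - intro H. rewrite H in E. nra.
Qed.

Lemma Dneg d : d < 0 -> 2 * d < thinv (th d + th d) /\ thinv (th d + th d) <> d.
Proof.
  intro h. set (D := thinv (th d + th d)). assert (E : th D = th d + th d) by apply th_thinv.
  assert (T : th d = - (d * d)) by (unfold th; rewrite Rabs_left by lra; ring).
  split.
  - destruct (Rlt_le_dec (2 * d) D) as [H|H]; [exact H|]. exfalso.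
    assert (th (2*d) = - (4 * (d * d))) by (unfold th; rewrite Rabs_left by lra; ring).
    destruct H as [H|H].
    + apply th_lt in H. nra.
    + rewrite H in *. nra.
  - intro H. rewrite H in E. nra.
Qed.
Lemma fin_ext f g : (forall q, g q <> 0 -> f q <> 0) -> fin f -> fin g.
Proof. intros H [l Hl]. exists l. intros q hq. apply Hl, H, hq. Qed.

Lemma fin_add f g : fin f -> fin g -> fin (fun q => f q + g q).
Proof.
  intros [l1 H1] [l2 H2]. exists (l1 ++ l2). intros q hq. apply in_or_app.
  destruct (Req_dec_T (f q) 0) as [z|z]; [right; apply H2; lra| left; apply H1; exact z].
Qed.
Lemma fin_scale a f : fin f -> fin (fun q => a * f q).
Proof. apply fin_ext. intros q h z. apply h. rewrite z. ring. Qed.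
Lemma fin_zero : fin (fun _ => 0).
Proof. exists nil. intros q h. apply h. reflexivity. Qed.
Lemma fin_e0 : fin e0.
Proof. exists (0 :: nil). intros q h. unfold e0 in h. destruct (Req_dec_T q 0); [left; auto| congruence]. Qed.
Lemma fin_e1 : fin e1.
Proof. exists ((-1) :: nil). intros q h. unfold e1 in h. destruct (Req_dec_T q (-1)); [left; auto| congruence]. Qed.
Lemma fin_shift f s : fin f -> fin (fun q => f (q + s)).
Proof.
  intros [l H]. exists (map (fun q => q - s) l). intros q h. apply H in h.
  replace q with ((fun q0 => q0 - s) (q + s)) by (simpl; ring). apply (in_map (fun q0 => q0 - s) l (q + s)). exact h.
Qed.
Lemma fin_tail f : fin f -> fin (tail f).
Proof.
  intro H. apply (fin_ext (fun q => f (q + deg f) / lc f)).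
  - intros q h. unfold tail in h. destruct (Rlt_dec q 0); [exact h| congruence].
  - unfold Rdiv. apply (fin_ext (fun q => / lc f * f (q + deg f))).
    + intros q h z. apply h. rewrite Rmult_comm. exact z.
    + apply fin_scale, fin_shift, H.
Qed.
Lemma fin_mk d c y : fin y -> fin (mk d c y).
Proof.
  intro H. unfold mk. apply fin_scale. apply fin_add; apply fin_shift; [apply fin_e0| exact H].
Qed.
Lemma fin_of3 f w : fin w -> (forall q, w q = 0 -> w (q+1) = 0 -> w (q+2) = 0 -> f q = 0) -> fin f.
Proof.
  intros [l H] K. exists (l ++ map (fun q => q - 1) l ++ map (fun q => q - 2) l).
  intros q h. apply in_or_app.
  destruct (Req_dec_T (w q) 0) as [a|a]; [| left; apply H; exact a].
  right. apply in_or_app.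
  destruct (Req_dec_T (w (q+1)) 0) as [b|b].
  - right. destruct (Req_dec_T (w (q+2)) 0) as [c|c].
    + exfalso. apply h. apply K; assumption.
    + replace q with ((fun q0 => q0 - 2) (q + 2)) by (simpl; ring). apply (in_map (fun q0 => q0 - 2) l (q + 2)). apply H. exact c.
  - left. replace q with ((fun q0 => q0 - 1) (q + 1)) by (simpl; ring). apply (in_map (fun q0 => q0 - 1) l (q + 1)). apply H. exact b.
Qed.
Lemma fin_sig w : fin w -> fin (sig w).
Proof. intro H. apply (fin_of3 _ w H). intros q a b c. unfold sig. rewrite a, b, c. unfold kk. destruct (ev q); ring. Qed.
Lemma fin_siginv w : fin w -> fin (siginv w).
Proof. intro H. apply (fin_of3 _ w H). intros q a b c. unfold siginv. rewrite a, b, c. unfold kk. destruct (ev q); ring. Qed.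
Record HT := mkH { hD : R; hL : R; hZ : R -> R }.
Definition addH (a b : HT) := mkH (hD a + hD b) (hL a + hL b) (fun q => hZ a q + hZ b q).
Definition scaleH (s : R) (a : HT) := mkH (s * hD a) (s * hL a) (fun q => s * hZ a q).
Definition ltH (a b : HT) := hD a < hD b \/ (hD a = hD b /\ (hL a < hL b \/ (hL a = hL b /\ pos (fun q => hZ b q - hZ a q)))).
Definition goodH (a : HT) := negsupp (hZ a) /\ fin (hZ a).

Lemma HT_eq a b : hD a = hD b -> hL a = hL b -> (forall q, hZ a q = hZ b q) -> a = b.
Proof.
  destruct a, b; simpl. intros -> -> H. f_equal. apply functional_extensionality. exact H.
Qed.

Lemma ltH_add a b c : ltH a b -> ltH (addH a c) (addH b c).
Proof.
  unfold ltH, addH; simpl. intros [H|[H1 [H|[H2 H3]]]].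
  - left; lra.
  - right; split; [lra| left; lra].
  - right; split; [lra| right; split; [lra|]]. apply (pos_ext (fun q => hZ b q - hZ a q)); [intro; ring| exact H3].
Qed.

Lemma goodH_add a b : goodH a -> goodH b -> goodH (addH a b).
Proof.
  intros [N1 F1] [N2 F2]. split; simpl.
  - intros q h. rewrite N1, N2 by exact h. ring.
  - apply fin_add; assumption.
Qed.
Lemma goodH_scale s a : goodH a -> goodH (scaleH s a).
Proof.
  intros [N1 F1]. split; simpl.
  - intros q h. rewrite N1 by exact h. ring.
  - apply fin_scale; assumption.
Qed.

Section Model.
Variable F : R -> Prop.
Hypothesis HF : is_subfield F.

Definition h (c : R) : R := if excluded_middle_informative (F c) then 0 else 1.

Definition phi (f : R -> R) : HT :=
  mkH (th (deg f)) (ln (lc f)) (fun q => sig (tail f) q + h (lc f) * e1 q).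
Definition psi (a : HT) : R -> R :=
  mk (thinv (hD a)) (exp (hL a)) (siginv (fun q => hZ a q - h (exp (hL a)) * e1 q)).

Lemma negsupp_e1 : negsupp e1.
Proof. intros q hq. apply e1_nonneg, hq. Qed.

Lemma phi_mk d c y : 0 < c -> negsupp y ->
  phi (mk d c y) = mkH (th d) (ln c) (fun q => sig y q + h c * e1 q).
Proof.
  intros C N. unfold phi. rewrite deg_mk, lc_mk, tail_mk by (lra || assumption). reflexivity.
Qed.

Lemma psi_phi f : pos f -> psi (phi f) = f.
Proof.
  intro P. destruct (pos_top f P) as [_ C]. apply functional_extensionality. intro q.
  unfold psi, phi; simpl. rewrite thinv_th, exp_ln by exact C.
  replace (fun q0 => sig (tail f) q0 + h (lc f) * e1 q0 - h (lc f) * e1 q0) with (sig (tail f))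
    by (apply functional_extensionality; intro; ring).
  rewrite siginv_sig. symmetry. apply mk_decomp, P.
Qed.

Lemma negsupp_Y a : goodH a -> negsupp (siginv (fun q => hZ a q - h (exp (hL a)) * e1 q)).
Proof.
  intros [N _]. apply negsupp_siginv. intros q hq. rewrite N, e1_nonneg by exact hq. ring.
Qed.

Lemma phi_psi a : goodH a -> phi (psi a) = a.
Proof.
  intro G. pose proof (negsupp_Y a G) as N. unfold psi.
  rewrite phi_mk by (apply exp_pos || exact N). apply HT_eq; simpl.
  - apply th_thinv.
  - apply ln_exp.
  - intro q. rewrite sig_siginv. ring.
Qed.

Lemma pos_psi a : goodH a -> pos (psi a).
Proof. intro G. unfold psi. apply pos_mk; [apply exp_pos| apply negsupp_Y, G]. Qed.

Lemma fin_psi a : goodH a -> fin (psi a).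
Proof.
  intros [N Fi]. unfold psi. apply fin_mk, fin_siginv.
  apply (fin_ext (fun q => hZ a q + (- h (exp (hL a))) * e1 q)).
  - intros q h0 z. apply h0. rewrite <- z. ring.
  - apply fin_add; [exact Fi| apply fin_scale, fin_e1].
Qed.

Lemma goodH_phi f : pos f -> fin f -> goodH (phi f).
Proof.
  intros P Fi. split; simpl.
  - intros q hq. rewrite (negsupp_sig _ (negsupp_tail f)), e1_nonneg by exact hq. ring.
  - apply fin_add; [apply fin_sig, fin_tail, Fi| apply fin_scale, fin_e1].
Qed.

Lemma pos_scale_shift c d f : 0 < c -> pos f -> pos (fun q => c * f (q - d)).
Proof.
  intros C [e [H1 H2]]. exists (e + d). split.
  - replace (e + d - d) with e by ring. nra.
  - intros q hq. rewrite H2 by lra. ring.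
Qed.

Lemma phi_mono f g : pos f -> pos g -> pos (fun q => g q - f q) -> ltH (phi f) (phi g).
Proof.
  intros Pf Pg Pd. destruct (pos_top f Pf) as [[Tf1 Tf2] Cf]. destruct (pos_top g Pg) as [[Tg1 Tg2] Cg].
  destruct Pd as [e [E1 E2]]. unfold ltH, phi; simpl.
  destruct (Rtotal_order (deg f) (deg g)) as [H|[H|H]].
  - left. apply th_lt, H.
  - right. split; [rewrite H; reflexivity|].
    destruct (Rtotal_order (lc f) (lc g)) as [H'|[H'|H']].
    + left. apply ln_increasing; assumption.
    + right. split; [rewrite H'; reflexivity|].
      apply (pos_ext (fun q => sig (tail g) q - sig (tail f) q)); [intro q; rewrite H'; ring|].
      apply pos_sig.
      exists (e - deg f). split.
      * unfold tail. assert (e - deg f < 0).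
        { destruct (Rtotal_order e (deg f)) as [a|[a|a]]; [lra| |].
          - exfalso. subst e. unfold lc in H'. rewrite <- H in H'. lra.
          - exfalso. rewrite Tf2 in E1 by exact a. rewrite Tg2 in E1 by lra. lra. }
        destruct (Rlt_dec (e - deg f) 0); [|lra].
        rewrite <- H. replace (e - deg f + deg f) with e by ring. rewrite <- H'.
        unfold Rdiv. apply Rmult_lt_reg_r with (lc f); [exact Cf|].
        rewrite Rmult_minus_distr_r, !Rmult_assoc, Rinv_l by lra. lra.
      * intros q hq. unfold tail. destruct (Rlt_dec q 0); [|ring].
        rewrite <- H, <- H'. replace (q + deg f) with (q + deg f) by ring.
        assert (Z : g (q + deg f) - f (q + deg f) = 0) by (apply E2; lra).
        unfold Rdiv. rewrite <- Rmult_minus_distr_r, Z. ring.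
    + exfalso. assert (e = deg f).
      { apply (top_unique (fun q => g q - f q)); split.
        - unfold lc in H'. rewrite <- H in H'. lra.
        - exact E2.
        - unfold lc in H'. rewrite <- H in H'. lra.
        - intros q hq. rewrite Tf2, Tg2 by lra. ring. }
      subst e. unfold lc in H'. rewrite <- H in H'. lra.
  - exfalso. assert (e = deg f).
    { apply (top_unique (fun q => g q - f q)); split.
      - lra.
      - exact E2.
      - rewrite Tg2 by exact H. lra.
      - intros q hq. rewrite Tf2, Tg2 by lra. ring. }
    subst e. rewrite Tg2 in E1 by exact H. unfold lc in Cf. lra.
Qed.

Lemma psi_mono a b : goodH a -> goodH b -> ltH a b -> pos (fun q => psi b q - psi a q).
Proof.
  intros Ga Gb L. pose proof (negsupp_Y a Ga) as Na. pose proof (negsupp_Y b Gb) as Nb.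
  pose proof (top_mk (thinv (hD a)) (exp (hL a)) _ (Rgt_not_eq _ _ (exp_pos (hL a))) Na) as [Ta1 Ta2].
  pose proof (top_mk (thinv (hD b)) (exp (hL b)) _ (Rgt_not_eq _ _ (exp_pos (hL b))) Nb) as [Tb1 Tb2].
  unfold psi. destruct L as [H|[H1 [H|[H2 H3]]]].
  - apply thinv_lt in H. exists (thinv (hD b)). split.
    + cbv beta. rewrite (Ta2 (thinv (hD b)) H). unfold mk. replace (thinv (hD b) - thinv (hD b)) with 0 by ring.
      rewrite e0_0, Nb by lra. pose proof (exp_pos (hL b)). lra.
    + intros q hq. cbv beta. rewrite (Ta2 q), (Tb2 q) by lra. ring.
  - exists (thinv (hD b)). split.
    + cbv beta. unfold mk. rewrite H1. replace (thinv (hD b) - thinv (hD b)) with 0 by ring.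
      rewrite e0_0, Nb, Na by lra. pose proof (exp_increasing _ _ H). lra.
    + intros q hq. cbv beta. rewrite (Tb2 q) by lra. rewrite (Ta2 q) by (rewrite H1; lra). ring.
  - unfold mk. rewrite H1, H2.
    apply (pos_ext (fun q => exp (hL b) * ((siginv (fun q0 => hZ b q0 - h (exp (hL b)) * e1 q0) (q - thinv (hD b))) -
      (siginv (fun q0 => hZ a q0 - h (exp (hL b)) * e1 q0) (q - thinv (hD b)))))); [intro; ring|].
    apply (pos_scale_shift (exp (hL b)) (thinv (hD b)) (fun s => siginv (fun q0 => hZ b q0 - h (exp (hL b)) * e1 q0) s -
      siginv (fun q0 => hZ a q0 - h (exp (hL b)) * e1 q0) s)); [apply exp_pos|]. apply pos_siginv.
    apply (pos_ext (fun q => hZ b q - hZ a q)); [intro; ring| exact H3].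
Qed.
Lemma h_F c : F c -> h c = 0.
Proof. intro H. unfold h. destruct (excluded_middle_informative (F c)); [reflexivity| contradiction]. Qed.
Lemma h_nF c : ~ F c -> h c = 1.
Proof. intro H. unfold h. destruct (excluded_middle_informative (F c)); [contradiction| reflexivity]. Qed.
Lemma F_mul_iff a c : F a -> a <> 0 -> (F (a * c) <-> F c).
Proof.
  intros Fa a0. split; intro H.
  - replace c with ((a * c) * / a) by (field; exact a0). apply (sf_mul F HF); [exact H| apply (sf_inv F HF); assumption].
  - apply (sf_mul F HF); assumption.
Qed.
Lemma h_mul a c : F a -> a <> 0 -> h (a * c) = h c.
Proof.
  intros Fa a0. destruct (classic (F c)) as [H|H].
  - rewrite !h_F; [reflexivity| exact H| apply (F_mul_iff a c Fa a0); exact H].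
  - rewrite !h_nF; [reflexivity| exact H| rewrite (F_mul_iff a c Fa a0); exact H].
Qed.

Definition mulP (f g : R -> R) := psi (addH (phi f) (phi g)).

Lemma mulP_mk d1 c1 y1 d2 c2 y2 : 0 < c1 -> 0 < c2 -> negsupp y1 -> negsupp y2 ->
  mulP (mk d1 c1 y1) (mk d2 c2 y2) =
  mk (thinv (th d1 + th d2)) (c1 * c2) (siginv (fun q => sig y1 q + sig y2 q + (h c1 + h c2 - h (c1 * c2)) * e1 q)).
Proof.
  intros C1 C2 N1 N2. unfold mulP. rewrite !phi_mk by assumption. unfold psi, addH; simpl.
  rewrite exp_plus, !exp_ln by assumption. f_equal. f_equal. apply functional_extensionality. intro; ring.
Qed.

Lemma e0_mk : e0 = mk 0 1 (fun _ => 0).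
Proof. apply functional_extensionality. intro q. unfold mk. replace (q - 0) with q by ring. ring. Qed.

Lemma sig_zero_fun : sig (fun _ => 0) = (fun _ => 0).
Proof. apply functional_extensionality. intro q. unfold sig, kk. destruct (ev q); ring. Qed.
Lemma siginv_zero_fun : siginv (fun _ => 0) = (fun _ => 0).
Proof. apply functional_extensionality. intro q. unfold siginv, kk. destruct (ev q); ring. Qed.

Lemma F1 : F 1.
Proof. apply (sf_1 F HF). Qed.

Lemma pos_e0 : pos e0.
Proof. rewrite e0_mk. apply pos_mk; [lra| intros q _; reflexivity]. Qed.

Lemma mulP_cst a g : F a -> 0 < a -> pos g -> mulP (fun q => a * e0 q) g = (fun q => a * g q).
Proof.
  intros Fa A P. destruct (pos_top g P) as [_ C].
  assert (Eg : g = mk (deg g) (lc g) (tail g)) by (apply functional_extensionality; apply mk_decomp; exact P).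
  assert (Ea : (fun q => a * e0 q) = mk 0 a (fun _ => 0)).
  { apply functional_extensionality. intro q. unfold mk. replace (q - 0) with q by ring. ring. }
  rewrite Ea. rewrite Eg at 1. rewrite mulP_mk by (try lra; try (intros q _; reflexivity); apply negsupp_tail).
  rewrite th_0, Rplus_0_l, thinv_th, sig_zero_fun, h_F by exact Fa. rewrite h_mul by (try exact Fa; lra).
  replace (fun q => 0 + sig (tail g) q + (0 + h (lc g) - h (lc g)) * e1 q) with (sig (tail g))
    by (apply functional_extensionality; intro; ring).
  rewrite siginv_sig. apply functional_extensionality. intro q.
  transitivity (a * mk (deg g) (lc g) (tail g) q); [unfold mk; ring| rewrite <- mk_decomp by exact P; reflexivity].
Qed.

Lemma mulP_pos f g : pos f -> pos g -> fin f -> fin g -> pos (mulP f g) /\ fin (mulP f g).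
Proof.
  intros Pf Pg Ff Fg. unfold mulP. pose proof (goodH_add _ _ (goodH_phi f Pf Ff) (goodH_phi g Pg Fg)) as G.
  split; [apply pos_psi, G| apply fin_psi, G].
Qed.

Lemma mulP_assoc f g k : pos f -> pos g -> pos k -> fin f -> fin g -> fin k ->
  mulP f (mulP g k) = mulP (mulP f g) k.
Proof.
  intros Pf Pg Pk Ff Fg Fk. unfold mulP.
  rewrite !phi_psi by (apply goodH_add; apply goodH_phi; assumption).
  f_equal. apply HT_eq; simpl; [ring| ring| intro; ring].
Qed.

Lemma mulP_comm f g : mulP f g = mulP g f.
Proof. unfold mulP. f_equal. apply HT_eq; simpl; [ring| ring| intro; ring]. Qed.

Definition mulraw (f g : R -> R) : R -> R :=
  if excluded_middle_informative (pos f /\ pos g) then mulP f g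
  else if excluded_middle_informative (exists a, F a /\ forall q, f q = a * e0 q) then (fun q => f 0 * g q)
  else (fun _ => 0).

Lemma fin_mulraw f g : fin f -> fin g -> fin (mulraw f g).
Proof.
  intros Ff Fg. unfold mulraw. destruct (excluded_middle_informative _) as [[Pf Pg]|_].
  - apply (mulP_pos f g Pf Pg Ff Fg).
  - destruct (excluded_middle_informative _); [apply fin_scale, Fg| apply fin_zero].
Qed.

Lemma mulraw_pos f g : pos f -> pos g -> mulraw f g = mulP f g.
Proof. intros Pf Pg. unfold mulraw. destruct (excluded_middle_informative _) as [_|n]; [reflexivity| tauto]. Qed.

Lemma mulraw_cst a g : F a -> mulraw (fun q => a * e0 q) g = (fun q => a * g q).
Proof.
  intro Fa. unfold mulraw. destruct (excluded_middle_informative _) as [[Pf Pg]|n].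
  - apply mulP_cst; [exact Fa| |exact Pg]. destruct Pf as [e [E1 E2]].
    destruct (Req_dec_T e 0) as [z|z]; [subst; rewrite e0_0 in E1; lra| rewrite e0_n in E1 by exact z; lra].
  - destruct (excluded_middle_informative _) as [_|n2].
    + rewrite e0_0. apply functional_extensionality. intro; ring.
    + exfalso. apply n2. exists a. split; [exact Fa| intro; reflexivity].
Qed.

Definition V := {f : R -> R | fin f}.
Definition vv (x : V) : R -> R := proj1_sig x.

Lemma V_ext (x y : V) : (forall q, vv x q = vv y q) -> x = y.
Proof.
  destruct x as [x Hx], y as [y Hy]. unfold vv; simpl. intro H.
  assert (x = y) by (apply functional_extensionality; exact H). subst. f_equal. apply proof_irrelevance.
Qed.

Definition vzero : V := exist _ (fun _ => 0) fin_zero.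
Definition vone : V := exist _ e0 fin_e0.
Definition vadd (x y : V) : V := exist _ (fun q => vv x q + vv y q) (fin_add _ _ (proj2_sig x) (proj2_sig y)).
Definition vopp (x : V) : V := exist _ (fun q => -1 * vv x q) (fin_scale (-1) _ (proj2_sig x)).
Definition vmul (x y : V) : V := exist _ (mulraw (vv x) (vv y)) (fin_mulraw _ _ (proj2_sig x) (proj2_sig y)).
Definition vcst (a : R) : V := exist _ (fun q => a * e0 q) (fin_scale a _ fin_e0).
Definition vlt (x y : V) : Prop := pos (fun q => vv y q - vv x q).

Definition M0 : LStruct :=
  {| car := V; zeroM := vzero; oneM := vone; addM := vadd; mulM := vmul; ltM := vlt; cst := vcst |}.
Lemma pos_cst a : 0 < a -> pos (fun q => a * e0 q).
Proof.
  intro A. exists 0. rewrite e0_0. split; [lra|]. intros q hq. rewrite e0_n by lra. ring.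
Qed.

Lemma vv_pos (x : V) : vlt vzero x -> pos (vv x).
Proof. intro H. refine (pos_ext _ _ _ H). intro; simpl; ring. Qed.

Lemma psi_zero : psi (mkH 0 0 (fun _ => 0)) = e0.
Proof.
  unfold psi; simpl. pose proof (thinv_th 0) as T0. rewrite th_0 in T0. rewrite T0, exp_0, h_F by apply F1.
  replace (fun q => 0 - 0 * e1 q) with (fun _ : R => 0) by (apply functional_extensionality; intro; ring).
  rewrite siginv_zero_fun, e0_mk. reflexivity.
Qed.

Lemma powM_spec (y x : V) (a : HT) : goodH a -> vv y = psi a ->
  forall j, vv (powM M0 y j) = psi (scaleH (INR (S j)) a).
Proof.
  intros G Ey j. induction j as [|j IH].
  - simpl powM. rewrite Ey. f_equal. apply HT_eq; simpl; [ring| ring| intro; ring].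
  - change (powM M0 y (S j)) with (vmul y (powM M0 y j)). unfold vmul, vv at 1; simpl.
    fold (vv y). fold (vv (powM M0 y j)). rewrite Ey, IH.
    rewrite mulraw_pos by (apply pos_psi; auto using goodH_scale).
    unfold mulP. rewrite !phi_psi by auto using goodH_scale. f_equal.
    apply HT_eq; simpl; rewrite ?S_INR; [ring| ring| intro; ring].
Qed.

Lemma M0_model : model_TF F M0.
Proof.
  constructor; simpl.
  - intros. apply V_ext; intro; simpl; ring.
  - intros. apply V_ext; intro; simpl; ring.
  - intros. apply V_ext; intro; simpl; ring.
  - intros x. exists (vopp x). apply V_ext; intro; simpl; ring.
  - intros x H. apply (not_pos0 (fun q => vv x q - vv x q)); [intro; ring| exact H].
  - intros x y z H1 H2. unfold vlt in *. refine (pos_ext _ _ _ (pos_add _ _ H1 H2)); intro; simpl; ring.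
  - intros x y. destruct (classic (x = y)) as [E|E]; [right; left; exact E|].
    assert (Ex : exists q, vv y q - vv x q <> 0).
    { apply NNPP. intro N. apply E. apply V_ext. intro q. apply NNPP. intro N2. apply N. exists q. lra. }
    destruct Ex as [q0 Hq0].
    assert (Fd : fin (fun q => vv y q - vv x q)).
    { apply (fin_ext (fun q => vv y q + (-1) * vv x q)); [intros q h0 z; apply h0; rewrite <- z; ring|].
      apply fin_add; [apply (proj2_sig y)| apply fin_scale, (proj2_sig x)]. }
    destruct (fin_top _ Fd q0 Hq0) as [e [T1 T2]].
    destruct (Rlt_le_dec 0 (vv y e - vv x e)) as [P|P].
    + left. exists e. split; [exact P| exact T2].
    + right; right. exists e. split; [lra|]. intros q hq. specialize (T2 q hq). simpl in T2. lra.
  - intros x y z H. unfold vlt in *. simpl. refine (pos_ext _ _ _ H); intro; simpl; ring.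
  - unfold vlt; simpl. refine (pos_ext _ _ _ pos_e0); intro; simpl; ring.
  - intros x y Hx Hy. apply vv_pos in Hx. apply vv_pos in Hy. unfold vlt; simpl.
    apply (pos_ext (mulraw (vv x) (vv y))); [intro; ring|].
    rewrite mulraw_pos by assumption. apply (mulP_pos _ _ Hx Hy (proj2_sig x) (proj2_sig y)).
  - intros x y z Hx Hy Hz. apply vv_pos in Hx. apply vv_pos in Hy. apply vv_pos in Hz.
    apply V_ext. intro q. unfold vmul, vv; simpl. fold (vv x). fold (vv y). fold (vv z).
    destruct (mulP_pos _ _ Hy Hz (proj2_sig y) (proj2_sig z)) as [P1 F1'].
    destruct (mulP_pos _ _ Hx Hy (proj2_sig x) (proj2_sig y)) as [P2 F2'].
    rewrite (mulraw_pos (vv y)), (mulraw_pos (vv x) (vv y)) by assumption.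
    rewrite !mulraw_pos by assumption.
    rewrite mulP_assoc by (try assumption; apply (proj2_sig _)). reflexivity.
  - intros x y Hx Hy. apply vv_pos in Hx. apply vv_pos in Hy. apply V_ext. intro q. unfold vmul, vv; simpl.
    fold (vv x). fold (vv y). rewrite !mulraw_pos by assumption. rewrite mulP_comm. reflexivity.
  - intros x Hx. apply V_ext. intro q. unfold vmul, vv; simpl.
    replace e0 with (fun q => 1 * e0 q) by (apply functional_extensionality; intro; ring).
    rewrite mulraw_cst by apply F1. ring.
  - intros x Hx. apply vv_pos in Hx.
    assert (G : goodH (scaleH (-1) (phi (vv x)))) by (apply goodH_scale, goodH_phi; [exact Hx| apply (proj2_sig x)]).
    exists (exist _ (psi (scaleH (-1) (phi (vv x)))) (fin_psi _ G)). split.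
    + unfold vlt; simpl. refine (pos_ext _ _ _ (pos_psi _ G)); intro; simpl; ring.
    + apply V_ext. intro q. unfold vmul, vv; simpl. fold (vv x).
      rewrite mulraw_pos by (try exact Hx; apply pos_psi, G).
      unfold mulP. rewrite phi_psi by exact G.
      replace (addH (phi (vv x)) (scaleH (-1) (phi (vv x)))) with (mkH 0 0 (fun _ => 0))
        by (apply HT_eq; simpl; [ring| ring| intro; ring]).
      rewrite psi_zero. reflexivity.
  - intros x y z Hx Hy Hz Hxy. apply vv_pos in Hx. apply vv_pos in Hy. apply vv_pos in Hz.
    unfold vlt, vmul, vv; simpl. fold (vv x). fold (vv y). fold (vv z).
    rewrite !mulraw_pos by assumption. unfold mulP.
    apply psi_mono; try (apply goodH_add; apply goodH_phi; try assumption; apply (proj2_sig _)).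
    apply ltH_add. apply phi_mono; assumption.
  - intros j x Hx. apply vv_pos in Hx.
    assert (G : goodH (scaleH (/ INR (S j)) (phi (vv x)))) by (apply goodH_scale, goodH_phi; [exact Hx| apply (proj2_sig x)]).
    set (y := exist _ (psi (scaleH (/ INR (S j)) (phi (vv x)))) (fin_psi _ G) : V).
    exists y. split.
    + unfold vlt; simpl. refine (pos_ext _ _ _ (pos_psi _ G)); intro; simpl; ring.
    + apply V_ext. intro q. rewrite (powM_spec y x _ G eq_refl j).
      replace (scaleH (INR (S j)) (scaleH (/ INR (S j)) (phi (vv x)))) with (phi (vv x)).
      * rewrite psi_phi by exact Hx. reflexivity.
      * pose proof (pos_INR j). rewrite S_INR. apply HT_eq; unfold scaleH; cbn [hD hL hZ]; [field; lra| field; lra| intro; field; lra].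
  - intros a b Fa Fb. apply V_ext. intro q. simpl. ring.
  - intros a b Fa Fb. apply V_ext. intro q. unfold vmul, vv; simpl. rewrite mulraw_cst by exact Fa. ring.
  - intros a Fa A. unfold vlt; simpl. refine (pos_ext _ _ _ (pos_cst a A)); intro; simpl; ring.
  - intros a b x Fa Fb. apply V_ext. intro q. unfold vmul, vv; simpl.
    rewrite !mulraw_cst by (try assumption; apply (sf_add F HF); assumption). ring.
  - intros a x y Fa. apply V_ext. intro q. unfold vmul, vv; simpl.
    rewrite !mulraw_cst by assumption. unfold vv. ring.
Qed.
Lemma sig_at_top w e : (forall q, e < q -> w q = 0) -> sig w e = w e.
Proof. intro H. unfold sig. rewrite (H (e+1)), (H (e+2)) by lra. unfold kk. destruct (ev e); ring. Qed.
Lemma sig_at w e : (forall q, e < q -> w q = 0) -> sig w (e - 1) = w (e - 1) + kk (w e).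
Proof.
  intro H. unfold sig. replace (e - 1 + 1) with e by ring. replace (e - 1 + 2) with (e + 1) by ring.
  rewrite (H (e + 1)) by lra. unfold kk. destruct (ev (e - 1)); ring.
Qed.
Lemma siginv_at w e : (forall q, e < q -> w q = 0) -> siginv w (e - 1) = w (e - 1) - kk (w e).
Proof.
  intro H. unfold siginv. replace (e - 1 + 1) with e by ring. replace (e - 1 + 2) with (e + 1) by ring.
  rewrite (H (e + 1)) by lra. unfold kk. destruct (ev (e - 1)); ring.
Qed.

Lemma negsupp_mk_neg d c y : d < 0 -> negsupp y -> negsupp (mk d c y).
Proof. intros D N q hq. unfold mk. rewrite e0_n by lra. rewrite N by lra. ring. Qed.

Lemma mk_zero_above d c y : negsupp y -> forall q, d < q -> mk d c y q = 0.
Proof. intros N q hq. unfold mk. rewrite e0_n by lra. rewrite N by lra. ring. Qed.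

Lemma key_pos d c y : 0 < c -> negsupp y -> fin y ->
  (forall q, mulP (mk d c y) (fun q => e0 q + mk d c y q) q = mk d c y q + mulP (mk d c y) (mk d c y) q) ->
  d = 0 /\ F c /\ forall q, y q = 0.
Proof.
  intros C N Fy E.
  destruct (Rtotal_order d 0) as [Hd|[Hd|Hd]].
  -
    exfalso. pose proof (Dneg d Hd) as [D1 D2]. set (D := thinv (th d + th d)) in *.
    assert (N2 : negsupp (mk d c y)) by (apply negsupp_mk_neg; assumption).
    assert (E1 : (fun q => e0 q + mk d c y q) = mk 0 1 (mk d c y)).
    { apply functional_extensionality. intro q. unfold mk at 2. replace (q - 0) with q by ring. ring. }
    specialize (E D). rewrite E1 in E. rewrite !mulP_mk in E by (try lra; assumption).
    rewrite th_0, Rplus_0_r, thinv_th in E. fold D in E.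
    assert (S1 : siginv (fun q => sig y q + sig (mk d c y) q + (h c + h 1 - h (c * 1)) * e1 q) (D - d) = y (D - d)).
    { transitivity (siginv (sig y) (D - d)); [| rewrite siginv_sig; reflexivity]. apply (siginv_agree _ _ d); [|lra].
      intros q hq. rewrite (sig_zero (mk d c y) d (mk_zero_above d c y N) q hq).
      rewrite Rmult_1_r, (h_F 1 F1). ring. }
    assert (S2 : siginv (fun q => sig y q + sig y q + (h c + h c - h (c * c)) * e1 q) 0 = 0).
    { apply negsupp_siginv; [|lra]. intros q hq. rewrite !(negsupp_sig y N q hq), e1_nonneg by exact hq. ring. }
    unfold mk in E, S1. rewrite S1 in E. replace (D - D) with 0 in E by ring.
    rewrite S2, e0_0 in E. rewrite (e0_n (D - d)) in E by lra. nra.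
  -
    subst d. split; [reflexivity|].
    set (L := c / (1 + c)).
    assert (HL : L * (1 + c) = c) by (unfold L; field; lra).
    assert (NL : negsupp (fun q => L * y q)) by (intros q hq; rewrite N by exact hq; ring).
    assert (E1 : (fun q => e0 q + mk 0 c y q) = mk 0 (1 + c) (fun q => L * y q)).
    { apply functional_extensionality. intro q. unfold mk. replace (q - 0) with q by ring. unfold L. field. lra. }
    rewrite E1 in E. rewrite (mulP_mk 0 c y 0 (1 + c) (fun q => L * y q)), (mulP_mk 0 c y 0 c y) in E by (try lra; assumption).
    pose proof (thinv_th 0) as T0. rewrite th_0 in T0. rewrite th_0, Rplus_0_r, T0 in E.
    destruct (classic (F c)) as [Fc|Fc].
    + split; [exact Fc|].
      assert (F1c : F (1 + c)) by (apply (sf_add F HF); [apply F1| exact Fc]).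
      rewrite (h_F c Fc), (h_F (1 + c) F1c), (h_F (c * (1 + c))), (h_F (c * c)) in E
        by (apply (sf_mul F HF); assumption).
      apply NNPP. intro NY. apply not_all_ex_not in NY. destruct NY as [q0 Hq0].
      destruct (fin_top y Fy q0 Hq0) as [e [T1 T2]].
      assert (He : e < 0) by (destruct (Rlt_le_dec e 0); [assumption| exfalso; apply T1, N; lra]).
      specialize (E (e - 1)). unfold mk in E. replace (e - 1 - 0) with (e - 1) in E by ring.
      rewrite (e0_n (e - 1)) in E by lra.
      assert (ZL : forall q, e < q -> L * y q = 0) by (intros q hq; rewrite T2 by exact hq; ring).
      rewrite !siginv_at in E.
      2: { intros q hq. rewrite (sig_zero y e T2 q hq). ring. }
      2: { intros q hq. rewrite (sig_zero y e T2 q hq), (sig_zero _ e ZL q hq). ring. }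
      rewrite !sig_at, !sig_at_top in E by assumption.
      set (u := y (e - 1)) in *. set (r := y e) in *. unfold kk in E.
      assert (E' : c*(1+c)*((1+L)*u + (1 + L*L*L - (1+L)*(1+L)*(1+L))*(r*r*r)) = c*u + c*c*(2*u - 6*(r*r*r))) by lra.
      assert (ID : c*(1+c)*((1+L)*u + (1 + L*L*L - (1+L)*(1+L)*(1+L))*(r*r*r)) - (c*u + c*c*(2*u - 6*(r*r*r)))
        = 3*c*c*(r*r*r)*(1-L) + (c*u - 3*c*(1+L)*(r*r*r))*(L*(1+c) - c)) by ring.
      rewrite E', HL in ID. replace (c - c) with 0 in ID by ring.
      assert (L1 : 1 - L > 0) by (unfold L; apply Rlt_Rminus; apply (Rmult_lt_reg_r (1+c)); [lra|]; unfold Rdiv; rewrite Rmult_assoc, Rinv_l by lra; lra).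
      assert (r * r * r <> 0) by (intro Z; apply T1; fold r; destruct (Rmult_integral _ _ Z) as [Z2|Z2]; [destruct (Rmult_integral _ _ Z2)|]; assumption).
      assert (3 * c * c * (r * r * r) * (1 - L) <> 0) by (repeat apply Rmult_integral_contrapositive_currified; lra).
      lra.
    + exfalso.
      assert (nF1c : ~ F (1 + c)) by (intro H; apply Fc; replace c with ((1 + c) + - 1) by ring;
        apply (sf_add F HF); [exact H| apply (sf_opp F HF), F1]).
      rewrite (h_nF c Fc), (h_nF (1+c) nF1c) in E.
      specialize (E (0 - 1)). unfold mk in E. replace (0 - 1 - 0) with (0 - 1) in E by ring.
      rewrite (e0_n (0 - 1)) in E by lra.
      assert (Z0 : forall q, 0 < q -> y q = 0) by (intros q hq; apply N; lra).
      assert (ZL0 : forall q, 0 < q -> L * y q = 0) by (intros q hq; rewrite N by lra; ring).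
      rewrite !siginv_at in E.
      2: { intros q hq. rewrite (negsupp_sig y N q), e1_nonneg by lra. ring. }
      2: { intros q hq. rewrite (negsupp_sig y N q), (negsupp_sig _ NL q), e1_nonneg by lra. ring. }
      rewrite (negsupp_sig y N 0), (negsupp_sig _ NL 0), (e1_nonneg 0) in E by lra.
      rewrite !sig_at in E by assumption.
      rewrite (N 0) in E by lra. replace (0 - 1) with (-1) in E by ring. rewrite e1_m1 in E.
      set (u := y (-1)) in *. unfold kk in E.
      set (T1 := 1 + 1 - h (c * (1 + c))) in *. set (T2 := 1 + 1 - h (c * c)) in *.
      assert (ID : c * (1 + c) * (0 + (u + 0 * 0 * 0 + (L * u + L * 0 * (L * 0) * (L * 0)) + T1 * 1 -
        (0 + 0 + T1 * 0) * (0 + 0 + T1 * 0) * (0 + 0 + T1 * 0))) -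
        (c * (0 + u) + c * c * (0 + (u + 0 * 0 * 0 + (u + 0 * 0 * 0) + T2 * 1 -
        (0 + 0 + T2 * 0) * (0 + 0 + T2 * 0) * (0 + 0 + T2 * 0))))
        = c * ((1 + c) * T1 - c * T2) + c * u * (L * (1 + c) - c)) by ring.
      rewrite E, HL in ID. replace (c - c) with 0 in ID by ring.
      assert (K : (1 + c) * T1 = c * T2).
      { assert (c * ((1 + c) * T1 - c * T2) = 0) by lra.
        destruct (Rmult_integral _ _ H) as [H'|H']; lra. }
      unfold T1, T2 in K.
      destruct (classic (F (c * (1 + c)))) as [G1|G1]; [rewrite (h_F _ G1) in K| rewrite (h_nF _ G1) in K];
      (destruct (classic (F (c * c))) as [G2|G2]; [rewrite (h_F _ G2) in K| rewrite (h_nF _ G2) in K]); try lra.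
      assert (c = 1) by lra. subst c. apply Fc, F1.
  -
    exfalso. pose proof (Dpos d Hd) as [D1 D2]. set (D := thinv (th d + th d)) in *.
    set (y' := fun q => y q + / c * e0 (q + d)).
    assert (Ny' : negsupp y') by (intros q hq; unfold y'; rewrite N by lra; rewrite e0_n by lra; ring).
    assert (E1 : (fun q => e0 q + mk d c y q) = mk d c y').
    { apply functional_extensionality. intro q. unfold mk, y'. replace (q - d + d) with q by ring. field. lra. }
    rewrite E1 in E. rewrite (mulP_mk d c y d c y'), (mulP_mk d c y d c y) in E by (try lra; assumption).
    fold D in E. specialize (E d).
    assert (S : siginv (fun q => sig y q + sig y' q + (h c + h c - h (c * c)) * e1 q) (d - D) =
                siginv (fun q => sig y q + sig y q + (h c + h c - h (c * c)) * e1 q) (d - D)).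
    { apply (siginv_agree _ _ (- d)); [|lra]. intros q hq.
      rewrite (sig_agree y' y (- d)); [reflexivity| |exact hq].
      intros q' hq'. unfold y'. rewrite e0_n by lra. ring. }
    unfold mk in E. rewrite S in E. replace (d - d) with 0 in E by ring. rewrite e0_0, (N 0) in E by lra. lra.
Qed.
Lemma mulraw_npos f g : ~ pos f -> mulraw f g =
  if excluded_middle_informative (exists a, F a /\ forall q, f q = a * e0 q) then (fun q => f 0 * g q) else (fun _ => 0).
Proof. intro NP. unfold mulraw. destruct (excluded_middle_informative (pos f /\ pos g)) as [[P _]|_]; [contradiction| reflexivity]. Qed.

Lemma good_const (b : V) : vmul b (vadd vone b) = vadd b (vmul b b) -> exists a, F a /\ b = vcst a.
Proof.
  intro E.
  assert (E' : forall q, mulraw (vv b) (fun q => e0 q + vv b q) q = vv b q + mulraw (vv b) (vv b) q)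
    by (intro q; apply (f_equal (fun x => vv x q)) in E; exact E).
  destruct (classic (pos (vv b))) as [P|NP].
  - assert (Pe : pos (fun q => e0 q + vv b q)) by (apply pos_add; [apply pos_e0| exact P]).
    rewrite (mulraw_pos _ _ P Pe), (mulraw_pos _ _ P P) in E'.
    pose proof (pos_top _ P) as [_ C].
    assert (Eb : mk (deg (vv b)) (lc (vv b)) (tail (vv b)) = vv b)
      by (apply functional_extensionality; intro q; symmetry; apply mk_decomp, P).
    destruct (key_pos (deg (vv b)) (lc (vv b)) (tail (vv b)) C (negsupp_tail _) (fin_tail _ (proj2_sig b)))
      as [D0 [Fc Y0]].
    { intro q. rewrite Eb. exact (E' q). }
    exists (lc (vv b)). split; [exact Fc|]. apply V_ext. intro q. unfold vcst, vv at 2; simpl.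
    rewrite (mk_decomp _ P q), D0. unfold mk. rewrite Y0. replace (q - 0) with q by ring. ring.
  - rewrite !(mulraw_npos _ _ NP) in E'.
    destruct (excluded_middle_informative _) as [[a [Fa Ha]]|NC].
    + exists a. split; [exact Fa|]. apply V_ext. intro q. exact (Ha q).
    + exists 0. split; [apply (sf_0 F HF)|]. apply V_ext. intro q. specialize (E' q). simpl in *. lra.
Qed.

End Model.

Theorem corollary10p4 (F : R -> Prop) (HF : is_subfield F)
  (Hcount : countable_set F) (n : nat) (psi : qf_formula n) :
  (exists a : Fin.t n -> R, (forall i, F (a i)) /\ sat Rstruct a psi) <->
  (forall M : LStruct, model_TF F M ->
     exists b : Fin.t n -> car M,
       sat M b psi /\
       forall i, mulM M (b i) (addM M (oneM M) (b i)) =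
                 addM M (b i) (mulM M (b i) (b i))).
Proof.
  split.
  - intros [a [Ha Hs]] M HM. exists (fun i => cst M (a i)). split.
    + apply (sat_cst F HF M HM a Ha). exact Hs.
    + intro i. apply (good_cst F HF M HM), Ha.
  - intro H. destruct (H (M0 F) (M0_model F HF)) as [b [Hs Hg]].
    assert (Hc : forall i, exists a, F a /\ b i = vcst a) by (intro i; apply (good_const F HF), Hg).
    set (a := fun i => proj1_sig (constructive_indefinite_description _ (Hc i))).
    assert (Ha : forall i, F (a i) /\ b i = vcst (a i))
      by (intro i; unfold a; destruct (constructive_indefinite_description _ (Hc i)); simpl; assumption).
    exists a. split; [intro i; apply Ha|].
    assert (Eb : b = fun i => cst (M0 F) (a i)) by (apply functional_extensionality; intro i; apply Ha).
    rewrite Eb in Hs. apply (sat_cst F HF (M0 F) (M0_model F HF) a (fun i => proj1 (Ha i))) in Hs. exact Hs.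
Qed.
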